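(* Let $K$ be a $15$-vertex $\mathbb{F}_2$-homology $8$-manifold that satisfies complementarity. Then $K$ has exactly $490$ eight-dimensional simplices.
   Context: A finite simplicial complex $K$ on vertex set $V$ is an $\mathbb{F}_2$-homology $d$-manifold if every simplex lies in a $d$-simplex and for every nonempty simplex $\sigma$ with $\dim\sigma<d$, $H_*(\mathrm{link}(\sigma,K);\mathbb{F}_2)\cong H_*(S^{d-\dim\sigma-1};\mathbb{F}_2)$, where $\mathrm{link}(\sigma,K)=\{\tau\in K:\tau\cap\sigma=\varnothing,\ \tau\cup\sigma\in K\}$. $K$ satisfies complementarity if for every $\sigma\subseteq V$ exactly one of $\sigma$, $V\setminus\sigma$ is a simplex of $K$. *)

(* Defs.v *)
From HB Require Import structures.
From mathcomp Require Import all_boot all_algebra.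
Set Implicit Arguments. Unset Strict Implicit. Unset Printing Implicit Defensive.
Import GRing.Theory.
Local Open Scope ring_scope.

Section Simplicial.
Variable V : finType.

(* An abstract simplicial complex on vertex set V: a downward-closed family
   of subsets of V containing every vertex {v}.  Simplices are sets; the
   dimension of sigma is #|sigma| - 1. *)
Definition simplicial_complex (K : {set {set V}}) : Prop :=
  (forall s t : {set V}, s \in K -> t \subset s -> t \in K) /\
  (forall v : V, [set v] \in K).

Definition link (s : {set V}) (K : {set {set V}}) : {set {set V}} :=
  [set t in K | [disjoint t & s] && ((t :|: s) \in K)].

Definition faces (L : {set {set V}}) (k : nat) : {set {set V}} :=
  [set s in L | #|s| == k]%N.

(* mod-2 boundary map from faces with k+1 vertices to faces with k vertices
   (matrix acting on row vectors) *)
Definition bdry (L : {set {set V}}) (k : nat)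
  : 'M['F_2]_(#|faces L k.+1|, #|faces L k|) :=
  \matrix_(i, j)
    (((@enum_val _ (mem (faces L k)) j : {set V}) \subset
      (@enum_val _ (mem (faces L k.+1)) i : {set V})) : bool)%:R.

(* i-th (unreduced) simplicial Betti number of L over F_2:
   dim C_i - rank d_i - rank d_{i+1}, with d_0 = 0. *)
Definition betti2 (L : {set {set V}}) (i : nat) : nat :=
  (#|faces L i.+1| - (if i is 0 then 0 else \rank (bdry L i))
                   - \rank (bdry L i.+1))%N.

(* H_*(L;F_2) = H_*(S^m;F_2) as graded F_2-vector spaces (finite dim),
   i.e. equal Betti numbers in every degree. *)
Definition F2_homology_sphere_like (L : {set {set V}}) (m : nat) : Prop :=
  forall i : nat, betti2 L i = ((i == 0%N) + (i == m))%N.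

Definition F2_homology_manifold (K : {set {set V}}) (d : nat) : Prop :=
  simplicial_complex K /\
  (forall s, s \in K -> exists2 t, t \in K & (s \subset t) && (#|t| == d.+1)%N) /\
  (forall s, s \in K -> s != set0 -> (#|s| <= d)%N ->
     F2_homology_sphere_like (link s K) (d - #|s|)%N).

Definition complementarity (K : {set {set V}}) : Prop :=
  forall s : {set V}, (s \in K) != (~: s \in K).

End Simplicial.

(* Main.v *)
Require Import Defs.
From mathcomp Require Import all_boot all_algebra.
From mathcomp Require Import zify.
Set Implicit Arguments. Unset Strict Implicit. Unset Printing Implicit Defensive.
Import GRing.Theory.
Local Open Scope ring_scope.

Section Helpers.
Variable V : finType.

Definition downclosed (L : {set {set V}}) :=
  forall s t : {set V}, s \in L -> t \subset s -> t \in L.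

Lemma link_down (K : {set {set V}}) s : downclosed K -> downclosed (link s K).
Proof.
move=> dK t u; rewrite !inE => /and3P[tK dts tsK] ut.
rewrite (dK _ _ tK ut) /=; apply/andP; split.
  by apply: disjointWl dts.
by apply: (dK _ _ tsK); rewrite setSU.
Qed.

Lemma count_between (L : {set {set V}}) k (sg tau : {set V}) :
  downclosed L -> sg \in faces L k.+2 -> tau \in faces L k ->
  #|[set r in faces L k.+1 | (r \subset sg) && (tau \subset r)]| =
  (if tau \subset sg then 2 else 0)%N.
Proof.
move=> dL; rewrite !inE => /andP[sL /eqP cs] /andP[tL /eqP ct].
case: ifP => ts; last first.
  apply/eqP; rewrite cards_eq0; apply/eqP/setP => r; rewrite !inE.
  apply/negP => /and3P[_ rs tr]; by rewrite (subset_trans tr rs) in ts.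
have -> : [set r in faces L k.+1 | (r \subset sg) && (tau \subset r)] =
          [set tau :|: [set x] | x in sg :\: tau].
  apply/setP => r; rewrite !inE; apply/idP/imsetP.
  - move=> /andP[/andP[rL /eqP cr] /andP[rs tr]].
    have : #|r :\: tau| == 1%N.
      by rewrite cardsD (setIidPr tr) cr ct; lia.
    case/cards1P => x rx; exists x.
      have : x \in r :\: tau by rewrite rx set11.
      rewrite !inE => /andP[-> xr]; by rewrite (subsetP rs).
    by rewrite -rx -{1}(setID r tau) (setIidPr tr).
  - case=> x; rewrite inE => /andP[xt xs] ->.
    rewrite subUset sub1set xs ts subsetUl /= andbT.
    rewrite (dL _ _ sL) ?subUset ?sub1set ?ts ?xs //=.
    by rewrite setUC cardsU1 xt ct.
rewrite card_in_imset; first by rewrite cardsD (setIidPr ts) cs ct; lia.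
move=> x y; rewrite !inE => /andP[xt _] /andP[yt _] e.
have : x \in tau :|: [set y] by rewrite -e !inE eqxx orbT.
by rewrite !inE (negbTE xt) /= => /eqP.
Qed.

End Helpers.

Section H2.
Variable V : finType.

Lemma sum_bool_card (A : {set {set V}}) (P : pred {set V}) :
  (\sum_(x in A) (P x : nat))%N = #|[set x in A | P x]|.
Proof.
rewrite (eq_bigr (fun x => if P x then 1 else 0)%N) //.
by rewrite -big_mkcondr sum1dep_card.
Qed.

Lemma bdry_comp (L : {set {set V}}) k :
  downclosed L -> bdry L k.+1 *m bdry L k = 0.
Proof.
move=> dL; apply/matrixP => i j; rewrite !mxE.
under eq_bigr => l _ do rewrite !mxE -natrM.
rewrite -natr_sum.
rewrite -(big_enum_val (fun x : {set V} =>
   (((x \subset enum_val i) : nat) * ((enum_val j \subset x) : nat))%N)) /=.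
under eq_bigr => x _ do rewrite mulnb.
rewrite (sum_bool_card _ (fun x => (x \subset enum_val i) && (enum_val j \subset x))) count_between //; try exact: enum_valP.
by case: ifP => _ //; apply/eqP.
Qed.
End H2.

Section H3.
Variable V : finType.

Lemma link_faces_card (K : {set {set V}}) tau j k :
  downclosed K -> tau \in faces K j ->
  #|faces (link tau K) k| = #|[set s in faces K (j + k) | tau \subset s]|.
Proof.
move=> dK; rewrite inE => /andP[tK /eqP ct].
have -> : [set s in faces K (j + k) | tau \subset s] =
          [set t :|: tau | t in faces (link tau K) k].
  apply/setP => s; rewrite !inE; apply/idP/imsetP.
  - move=> /andP[/andP[sK /eqP cs] ts]; exists (s :\: tau).
      have e : s :\: tau :|: tau = s by rewrite setUC -{2}(setID s tau) (setIidPr ts).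
      rewrite !inE (dK _ _ sK (subsetDl _ _)) e sK /= andbT.
      rewrite cardsD (setIidPr ts) cs ct; apply/andP; split; last by apply/eqP; lia.
      rewrite -setI_eq0; apply/eqP/setP => x; rewrite !inE.
      by case: (x \in tau); rewrite ?andbF.
    by rewrite setUC -{1}(setID s tau) (setIidPr ts).
  - case=> t; rewrite !inE => /andP[/and3P[tK0 dts tsK] /eqP cT] ->.
    rewrite tsK subsetUr andbT cardsU.
    move: dts; rewrite -setI_eq0 => /eqP ->; rewrite cards0 ct cT; apply/eqP; lia.
rewrite card_in_imset // => x y; rewrite !inE => /andP[/and3P[_ dx _] _] /andP[/and3P[_ dy _] _] e.
have hx : x = (x :|: tau) :\: tau.
  by rewrite setDUl setDv setU0; apply/esym/setDidPl.
have hy : y = (y :|: tau) :\: tau.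
  by rewrite setDUl setDv setU0; apply/esym/setDidPl.
by rewrite hx hy e.
Qed.

Lemma sum_link (K : {set {set V}}) j k :
  downclosed K ->
  (\sum_(t in faces K j) #|faces (link t K) k|)%N = ('C(j + k, j) * #|faces K (j + k)|)%N.
Proof.
move=> dK.
under eq_bigr => t tF do rewrite (link_faces_card k dK tF).
under eq_bigr => t _ do rewrite -(sum_bool_card _ (fun s => t \subset s)).
rewrite exchange_big /= mulnC -sum_nat_const.
apply: eq_bigr => s; rewrite inE => /andP[sK /eqP cs].
rewrite sum_bool_card -cs -cards_draws; apply: eq_card => t; rewrite !inE.
apply/andP/andP => [[/andP[_ /eqP ->] ->]|[ts /eqP <-]] //.
by rewrite (dK _ _ sK ts) eqxx.
Qed.
End H3.

Section H4.
Variable V : finType.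

Lemma compl_count (K : {set {set V}}) k :
  complementarity K -> (k <= #|V|)%N ->
  (#|faces K k| + #|faces K (#|V| - k)|)%N = 'C(#|V|, k).
Proof.
move=> cK kn; rewrite -card_draws -(cardsID K [set A : {set V} | #|A| == k]).
congr (_ + _)%N.
  by apply: eq_card => s; rewrite !inE andbC.
have -> : faces K (#|V| - k) = (@setC V) @: ([set A : {set V} | #|A| == k] :\: K).
  apply/setP => s; rewrite !inE; apply/idP/imsetP.
  - move=> /andP[sK /eqP cs]; exists (~: s); last by rewrite setCK.
    have := cK s; rewrite sK /= => ns.
    rewrite !inE ns /=; apply/eqP.
    have := cardsC s; rewrite cs; lia.
  - case=> u; rewrite !inE => /andP[uK /eqP cu] ->.
    have := cK u; rewrite (negbTE uK) => h.
    have -> : ~: u \in K by case: (~: u \in K) h.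
    apply/eqP.
    have := cardsC u; rewrite cu; lia.
by rewrite card_imset //; apply: setC_inj.
Qed.
End H4.

Local Close Scope ring_scope.

Lemma faces_link_empty (V : finType) (K : {set {set V}}) tau j m :
  (forall s, s \in K -> #|s| <= 9)%N -> tau \in faces K j -> (9 < j + m)%N ->
  #|faces (link tau K) m| = 0%N.
Proof.
move=> mx; rewrite inE => /andP[_ /eqP ct] jm; apply/eqP; rewrite cards_eq0.
apply/eqP/setP => t; rewrite !inE; apply/negP => /andP[/and3P[_ dt tK] /eqP cT].
have := mx _ tK; rewrite cardsU; move: dt; rewrite -setI_eq0 => /eqP ->.
rewrite cards0 ct cT; lia.
Qed.

Theorem proposition6p2 (V : finType) (K : {set {set V}}) :
  #|V| = 15 ->
  F2_homology_manifold K 8 ->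
  complementarity K ->
  #|faces K 9| = 490.
Proof.
move=> hV [[dK vK] [pure lk]] cK.
have dK' : downclosed K := dK.
have mx : forall s, s \in K -> (#|s| <= 9)%N.
  move=> s sK; have [t tK /andP[st /eqP ct]] := pure s sK.
  by rewrite -ct subset_leq_card.
have ne : forall tau j, tau \in faces K j -> (0 < j)%N -> tau != set0.
  move=> tau j; rewrite inE => /andP[_ /eqP ct] jp; apply/eqP => e.
  by move: ct; rewrite e cards0 => ej; rewrite -ej in jp.
have c6 := compl_count (k:=6) cK; rewrite hV in c6.
have c7 := compl_count (k:=7) cK; rewrite hV in c7.
have e6 : 'C(15, 6) = 5 * 1001 by vm_compute.
have e7 : 'C(15, 7) = 5 * 1287 by vm_compute.
rewrite e6 in c6; rewrite e7 in c7.
have c6' := c6 isT; have c7' := c7 isT.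
have l8 : forall tau, tau \in faces K 8 -> #|faces (link tau K) 1| = 2%N.
  move=> tau tF.
  have tF' := tF; rewrite inE in tF'; case/andP: tF' => tK /eqP ct.
  have := lk tau.
  move=> /(_ tK (ne tau 8 tF isT)); rewrite ct => /(_ isT) /(_ 0%N).
  rewrite /betti2 /=.
  have r : \rank (bdry (link tau K) 1) <= #|faces (link tau K) 2| := rank_leq_row _.
  have z : #|faces (link tau K) 2| = 0 := faces_link_empty (m:=2) mx tF isT.
  move: r z; set a := #|faces (link tau K) 2|; set c := #|faces (link tau K) 1|.
  set R := \rank _; clear; lia.
have l6 : forall tau, tau \in faces K 6 ->
   (#|faces (link tau K) 1| + #|faces (link tau K) 3| =
    #|faces (link tau K) 2| + 2)%N.
  move=> tau tF.
  have tF' := tF; rewrite inE in tF'; case/andP: tF' => tK /eqP ct.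
  have := lk tau.
  move=> /(_ tK (ne tau 6 tF isT)); rewrite ct => /(_ isT) h.
  have h0 := h 0%N; have h1 := h 1%N; have h2 := h 2%N.
  rewrite /betti2 /= in h0 h1 h2.
  set L := link tau K in h0 h1 h2 *.
  have r3 : \rank (bdry L 3) <= #|faces L 4| := rank_leq_row _.
  have z4 : #|faces L 4| = 0 := faces_link_empty (m:=4) mx tF isT.
  have r1 : \rank (bdry L 1) <= #|faces L 1| := rank_leq_col _.
  have r2 : \rank (bdry L 2) <= #|faces L 3| := rank_leq_row _.
  have r12 : \rank (bdry L 2) + \rank (bdry L 1) - #|faces L 2| <= 0.
    have := mxrank_mul_min (bdry L 2) (bdry L 1).
    by rewrite bdry_comp ?mxrank0 //; apply: link_down.
  move: h0 h1 h2 r1 r2 r3 z4 r12.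
  set R1 := \rank (bdry L 1); set R2 := \rank (bdry L 2); set R3 := \rank (bdry L 3).
  set a1 := #|faces L 1|; set a2 := #|faces L 2|; set a3 := #|faces L 3|; set a4 := #|faces L 4|.
  clear; lia.
have s81 := sum_link 8 1 dK'.
have s61 := sum_link 6 1 dK'.
have s62 := sum_link 6 2 dK'.
have s63 := sum_link 6 3 dK'.
rewrite (eq_bigr (fun _ => 2%N)) in s81; last exact: l8.
rewrite sum_nat_const in s81.
have : (\sum_(t in faces K 6) (#|faces (link t K) 1| + #|faces (link t K) 3|))%N =
       (\sum_(t in faces K 6) (#|faces (link t K) 2| + 2))%N.
  by apply: eq_bigr => t tF; apply: l6.
rewrite !big_split /= s61 s63 s62 sum_nat_const.
have b1 : 'C(8 + 1, 8) = 9%N by vm_compute.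
have b2 : 'C(6 + 1, 6) = 7%N by vm_compute.
have b3 : 'C(6 + 2, 6) = 28%N by vm_compute.
have b4 : 'C(6 + 3, 6) = 84%N by vm_compute.
rewrite b1 in s81; rewrite b2 b3 b4.
move=> E.
have F1 : #|faces K 8| * 2 = 9 * #|faces K 9| := s81.
have F2 : 7 * #|faces K 7| + 84 * #|faces K 9| = 28 * #|faces K 8| + #|faces K 6| * 2 := E.
have F3 : #|faces K 6| + #|faces K 9| = 5 * 1001 := c6'.
have F4 : #|faces K 7| + #|faces K 8| = 5 * 1287 := c7'.
move: F1 F2 F3 F4.
set a6 := #|faces K 6|; set a7 := #|faces K 7|; set a8 := #|faces K 8|; set a9 := #|faces K 9|.
clear; lia.
Qed.
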